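(* Let $\Omega$ be a non-empty bounded open subset of $\mathbf{R}^2$, let $h:\Omega\to\mathbf{R}$ be continuous, and let $\alpha,\beta:\Omega\to\mathbf{R}$ be $C^1$ functions such that $|\alpha_x\beta_y-\alpha_y\beta_x|+|h|>0$ and $(\alpha_x\beta_y-\alpha_y\beta_x)h\ge0$ in $\Omega$. Then any $C^1$ solution $(u,v):\Omega\to\mathbf{R}^2$ in $\Omega$ of the system $$u_xv_y-u_yv_x=h,\qquad \beta_yu_x-\beta_xu_y-\alpha_yv_x+\alpha_xv_y=0$$ satisfies the convex hull-like property in $\Omega$.
   Context: A function $\psi:\mathbf{R}^2\to\mathbf{R}$ is quasi-convex if for each $r\in\mathbf{R}$ the set $\psi^{-1}(]-\infty,r])$ is convex. A continuous function $f:\Omega\to\mathbf{R}^2$ satisfies the convex hull-like property in $\Omega$ if for every continuous quasi-convex $\psi:\mathbf{R}^2\to\mathbf{R}$ there exists $x^*\in\partial\Omega$ such that $\limsup_{x\to x^*,\,x\in\Omega}\psi(f(x))=\sup_{x\in\Omega}\psi(f(x))$. *)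

(* Defs.v *)
From Stdlib Require Import Reals.
From Coquelicot Require Import Coquelicot.
Open Scope R_scope.

Definition R2 : Type := (R * R)%type.

Definition dist2 (p q : R2) : R :=
  sqrt ((fst p - fst q)^2 + (snd p - snd q)^2).

Definition bounded2 (O : R2 -> Prop) : Prop :=
  exists M : R, forall p, O p -> dist2 p (0, 0) <= M.

Definition boundary2 (O : R2 -> Prop) (p : R2) : Prop :=
  (forall eps : R, 0 < eps -> exists q, O q /\ dist2 q p < eps) /\
  (forall eps : R, 0 < eps -> exists q, ~ O q /\ dist2 q p < eps).

Definition C1_on (O : R2 -> Prop) (f fx fy : R2 -> R) : Prop :=
  forall p, O p ->
    is_derive (fun t => f (t, snd p)) (fst p) (fx p) /\
    is_derive (fun t => f (fst p, t)) (snd p) (fy p) /\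
    continuous f p /\ continuous fx p /\ continuous fy p.

Definition convex2 (S : R2 -> Prop) : Prop :=
  forall p q (t : R), S p -> S q -> 0 <= t <= 1 ->
    S ((1 - t) * fst p + t * fst q, (1 - t) * snd p + t * snd q).

Definition quasi_convex (psi : R2 -> R) : Prop :=
  forall r : R, convex2 (fun p => psi p <= r).

Definition sup_on (O : R2 -> Prop) (g : R2 -> R) : Rbar :=
  Lub_Rbar (fun r => exists x, O x /\ r = g x).

Definition limsup_on (O : R2 -> Prop) (g : R2 -> R) (x0 : R2) : Rbar :=
  Rbar_glb (fun s => exists eps : R, 0 < eps /\
     s = sup_on (fun x => O x /\ dist2 x x0 < eps) g).

Definition convex_hull_like (O : R2 -> Prop) (f : R2 -> R2) : Prop :=
  forall psi : R2 -> R,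
    (forall q, continuous psi q) -> quasi_convex psi ->
    exists xs : R2, boundary2 O xs /\
      limsup_on O (fun x => psi (f x)) xs = sup_on O (fun x => psi (f x)).

(* Main.v *)
Require Import Defs.
From Stdlib Require Import Reals Lra Psatz Lia ZArith Classical ClassicalEpsilon.
From Coquelicot Require Import Coquelicot.
Open Scope R_scope.

Lemma dir_deriv (O : R2 -> Prop) (g gx gy : R2 -> R) (p : R2) (v1 v2 k : R) :
  open O -> C1_on O g gx gy -> O p -> 0 < k ->
  exists s0, 0 < s0 /\ forall s, 0 < s < s0 ->
    Rabs (g (fst p + s * v1, snd p + s * v2) - g p - s * (v1 * gx p + v2 * gy p)) <= k * s.
Proof.
  intros HO HC Hp Hk.
  destruct p as [x y].
  assert (Hd : differentiable_pt_lim (fun a b => g (a, b)) x y (gx (x, y)) (gy (x, y))).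
  { apply filterdiff_differentiable_pt_lim.
    assert (H := is_derive_filterdiff (fun a b => g (a, b)) x y (fun a b => gx (a, b)) (gy (x, y))).
    simpl in H.
    assert (H1 : filterdiff (fun u : R * R => g (fst u, snd u)) (locally (x, y))
      (fun u : R * R => plus (scal (fst u) (gx (x, y))) (scal (snd u) (gy (x, y))))).
    { apply H.
      - apply filter_imp with (2 := HO (x, y) Hp).
        intros [a b] Hab. simpl. exact (proj1 (HC _ Hab)).
      - exact (proj1 (proj2 (HC _ Hp))).
      - eapply continuous_ext. 2: exact (proj1 (proj2 (proj2 (proj2 (HC _ Hp))))). intros [a b]; reflexivity. }
    eapply filterdiff_ext_lin. exact H1.
    intros [a b]; simpl. unfold plus, scal; simpl. unfold mult; simpl. ring. }
  assert (Hl' : derivable_pt_lim (fun t => g (x + t * v1, y + t * v2)) 0 (gx (x,y) * v1 + gy (x,y) * v2)).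
  { apply (derivable_pt_lim_comp_2d (fun a b => g (a, b)) (fun s => x + s * v1)
     (fun s => y + s * v2) 0 (gx (x,y)) (gy (x,y)) v1 v2).
    - replace (x + 0 * v1) with x by ring. replace (y + 0 * v2) with y by ring. exact Hd.
    - apply is_derive_Reals. auto_derive; auto; ring.
    - apply is_derive_Reals. auto_derive; auto; ring. }
  destruct (Hl' k Hk) as [d Hdd].
  exists d. split. apply cond_pos. intros s [Hs1 Hs2].
  assert (Hs : s <> 0) by lra.
  specialize (Hdd s Hs). rewrite Rplus_0_l in Hdd.
  assert (Has : Rabs s < d) by (rewrite Rabs_pos_eq; lra).
  specialize (Hdd Has). replace (x + 0 * v1) with x in Hdd by ring. replace (y + 0 * v2) with y in Hdd by ring. simpl.
  replace (g (x + s * v1, y + s * v2) - g (x, y) - s * (v1 * gx (x, y) + v2 * gy (x, y)))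
   with (s * ((g (x + s * v1, y + s * v2) - g (x, y)) / s - (gx (x, y) * v1 + gy (x, y) * v2))) by (field; auto).
  rewrite Rabs_mult. rewrite (Rabs_pos_eq s) by lra. nra.
Qed.


Definition near (p q : R2) (d : R) : Prop :=
  Rabs (fst q - fst p) < d /\ Rabs (snd q - snd p) < d.

Definition ceps (f : R2 -> R) (p : R2) : Prop :=
  forall e, 0 < e -> exists d, 0 < d /\ forall q, near p q d -> Rabs (f q - f p) < e.

Lemma cont_ceps (f : R2 -> R) p : continuous f p -> ceps f p.
Proof.
  intros H e He.
  assert (H1 := proj1 (filterlim_locally f (f p)) H (mkposreal e He)).
  destruct H1 as [d Hd]. exists d. split. apply cond_pos.
  intros q [Hq1 Hq2]. apply (Hd q). split; simpl; exact Hq1 || exact Hq2.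
Qed.

Lemma cont_ceps1 (f : R -> R) x : continuous f x ->
  forall e, 0 < e -> exists d, 0 < d /\ forall y, Rabs (y - x) < d -> Rabs (f y - f x) < e.
Proof.
  intros H e He.
  assert (H1 := proj1 (filterlim_locally f (f x)) H (mkposreal e He)).
  destruct H1 as [d Hd]. exists d. split. apply cond_pos.
  intros y Hy. apply (Hd y). exact Hy.
Qed.

Lemma open_near (O : R2 -> Prop) p : open O -> O p -> exists d, 0 < d /\ forall q, near p q d -> O q.
Proof.
  intros HO Hp. destruct (HO p Hp) as [d Hd]. exists d. split. apply cond_pos.
  intros q [H1 H2]. apply Hd. split; assumption.
Qed.

Lemma near_sym p q d : near p q d -> near q p d.
Proof. unfold near; intros [H1 H2]; rewrite Rabs_minus_sym in H1; rewrite Rabs_minus_sym in H2; auto. Qed.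

Lemma near_trans p q r d1 d2 : near p q d1 -> near q r d2 -> near p r (d1 + d2).
Proof.
  unfold near; intros [H1 H2] [H3 H4].
  split.
  - replace (fst r - fst p) with ((fst r - fst q) + (fst q - fst p)) by ring.
    eapply Rle_lt_trans. apply Rabs_triang. lra.
  - replace (snd r - snd p) with ((snd r - snd q) + (snd q - snd p)) by ring.
    eapply Rle_lt_trans. apply Rabs_triang. lra.
Qed.

Lemma near_mono p q d1 d2 : near p q d1 -> d1 <= d2 -> near p q d2.
Proof. unfold near; intros [H1 H2] H; split; lra. Qed.

Lemma sqrt_ge_abs a b : Rabs a <= sqrt (a ^ 2 + b ^ 2).
Proof.
  rewrite <- sqrt_Rsqr_abs. apply sqrt_le_1_alt. unfold Rsqr. nra.
Qed.

Lemma dist2_near p q e : dist2 q p < e -> near p q e.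
Proof.
  unfold dist2, near. intros H. split.
  - eapply Rle_lt_trans. apply sqrt_ge_abs. exact H.
  - eapply Rle_lt_trans. 2: exact H. rewrite Rplus_comm. apply sqrt_ge_abs.
Qed.

Lemma near_dist2 p q e : near p q (e / 2) -> dist2 q p < e.
Proof.
  unfold dist2, near. intros [H1 H2].
  set (a := fst q - fst p) in *. set (b := snd q - snd p) in *.
  apply Rle_lt_trans with (Rabs a + Rabs b); [| lra].
  rewrite <- (sqrt_Rsqr (Rabs a + Rabs b)) by (generalize (Rabs_pos a) (Rabs_pos b); lra).
  apply sqrt_le_1_alt. unfold Rsqr.
  assert (a ^ 2 = Rabs a * Rabs a) by (rewrite <- Rabs_mult; rewrite Rabs_pos_eq; nra).
  assert (b ^ 2 = Rabs b * Rabs b) by (rewrite <- Rabs_mult; rewrite Rabs_pos_eq; nra).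
  generalize (Rabs_pos a) (Rabs_pos b). nra.
Qed.

Lemma bounded_comp (O : R2 -> Prop) : bounded2 O ->
  exists B, forall p, O p -> Rabs (fst p) <= B /\ Rabs (snd p) <= B.
Proof.
  intros [M HM]. exists M. intros p Hp. specialize (HM p Hp).
  unfold dist2 in HM. simpl in HM. rewrite !Rminus_0_r in HM.
  split.
  - eapply Rle_trans. apply sqrt_ge_abs. exact HM.
  - eapply Rle_trans. 2: exact HM. rewrite Rplus_comm. apply sqrt_ge_abs.
Qed.

Definition conv (q : nat -> R2) (l : R2) : Prop :=
  forall e, 0 < e -> exists N, forall n, (N <= n)%nat -> near l (q n) e.

Lemma conv_ceps q l f : conv q l -> ceps f l ->
  forall e, 0 < e -> exists N, forall n, (N <= n)%nat -> Rabs (f (q n) - f l) < e.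
Proof.
  intros Hq Hf e He. destruct (Hf e He) as [d [Hd Hd']].
  destruct (Hq d Hd) as [N HN]. exists N. intros n Hn. apply Hd'. auto.
Qed.

Lemma choice_nat {A : Type} (P : nat -> A -> Prop) :
  (forall n, exists a, P n a) -> exists f : nat -> A, forall n, P n (f n).
Proof.
  intros H. exists (fun n => proj1_sig (constructive_indefinite_description _ (H n))).
  intros n. exact (proj2_sig (constructive_indefinite_description _ (H n))).
Qed.


Lemma inv_small e : 0 < e -> exists N, forall n, (N <= n)%nat -> / INR (S n) < e.
Proof.
  intros He. destruct (archimed (/ e)) as [H1 _].
  assert (0 <= IZR (up (/ e))). { assert (0 < / e) by (apply Rinv_0_lt_compat; lra). lra. }
  exists (Z.to_nat (up (/ e))). intros n Hn.
  assert (HN : IZR (up (/ e)) <= INR n).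
  { rewrite <- (Z2Nat.id (up (/ e))). rewrite <- INR_IZR_INZ. apply le_INR. auto.
    apply le_IZR. exact H. }
  rewrite S_INR.
  assert (0 < / e) by (apply Rinv_0_lt_compat; lra).
  replace e with (/ / e) by (field; lra).
  apply Rinv_lt_contravar. nra. lra.
Qed.

Lemma inv_S_mono m n : (m <= n)%nat -> / INR (S n) <= / INR (S m).
Proof.
  intros H. apply Rinv_le_contravar. apply lt_0_INR; lia. apply le_INR; lia.
Qed.

Lemma incr_ge (s : nat -> nat) : (forall k, (s k < s (S k))%nat) -> forall k, (k <= s k)%nat.
Proof. intros H k; induction k. lia. specialize (H k); lia. Qed.

Lemma incr_mono (s : nat -> nat) : (forall k, (s k < s (S k))%nat) -> forall m n, (m <= n)%nat -> (s m <= s n)%nat.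
Proof. intros H m n Hmn; induction Hmn. lia. specialize (H m0); lia. Qed.

Lemma subseq1 (x : nat -> R) (l : R) : ValAdh x l ->
  exists s : nat -> nat, (forall k, (s k < s (S k))%nat) /\ forall k, Rabs (x (s k) - l) < / INR (S k).
Proof.
  intros H.
  assert (H' : forall k N, exists n, (N <= n)%nat /\ Rabs (x n - l) < / INR (S k)).
  { intros k N. assert (Hp : 0 < / INR (S k)) by (apply Rinv_0_lt_compat; apply lt_0_INR; lia).
    destruct (H (disc l (mkposreal _ Hp)) N) as [n [Hn Hv]].
    - exists (mkposreal _ Hp). intros y Hy. exact Hy.
    - exists n. split; auto. }
  assert (Hc : forall k, exists c : nat -> nat, forall N, (N <= c N)%nat /\ Rabs (x (c N) - l) < / INR (S k)).
  { intros k. apply (choice_nat (fun N n => (N <= n)%nat /\ Rabs (x n - l) < / INR (S k))). intros N. apply H'. }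
  destruct (choice_nat _ Hc) as [c Hcc].
  exists (fix sg k := match k with O => c O O | S k' => c k (S (sg k')) end).
  split.
  - intros k. simpl. destruct (Hcc (S k) (S ((fix sg (k0 : nat) : nat :=
        match k0 with O => c O O | S k' => c k0 (S (sg k')) end) k))). lia.
  - intros k. destruct k; simpl. apply Hcc. apply Hcc.
Qed.

Lemma BW2 (q : nat -> R2) (B : R) : (forall n, Rabs (fst (q n)) <= B /\ Rabs (snd (q n)) <= B) ->
  exists s : nat -> nat, (forall k, (s k < s (S k))%nat) /\ exists l, conv (fun k => q (s k)) l.
Proof.
  intros HB.
  destruct (Bolzano_Weierstrass (fun n => fst (q n)) (fun c => - B <= c <= B) (compact_P3 _ _)) as [l1 Hl1].
  { intros n. destruct (HB n) as [H _]. revert H; unfold Rabs; destruct (Rcase_abs _); lra. }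
  destruct (subseq1 _ _ Hl1) as [s1 [Hs1 Hs1']].
  destruct (Bolzano_Weierstrass (fun n => snd (q (s1 n))) (fun c => - B <= c <= B) (compact_P3 _ _)) as [l2 Hl2].
  { intros n. destruct (HB (s1 n)) as [_ H]. revert H; unfold Rabs; destruct (Rcase_abs _); lra. }
  destruct (subseq1 _ _ Hl2) as [s2 [Hs2 Hs2']].
  exists (fun k => s1 (s2 k)). split.
  - intros k. specialize (Hs2 k). assert (H := incr_mono s1 Hs1 (S (s2 k)) (s2 (S k)) Hs2).
    specialize (Hs1 (s2 k)). lia.
  - exists (l1, l2). intros e He. destruct (inv_small e He) as [N HN].
    exists N. intros n Hn. unfold near; simpl. split.
    + eapply Rlt_le_trans. apply Hs1'. eapply Rle_trans. apply inv_S_mono. apply (incr_ge s2 Hs2 n).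
      left. apply HN. auto.
    + eapply Rlt_trans. apply Hs2'. apply HN; auto.
Qed.

Lemma conv_sub q l s : (forall k, (s k < s (S k))%nat) -> conv q l -> conv (fun k => q (s k)) l.
Proof.
  intros Hs Hq e He. destruct (Hq e He) as [N HN]. exists N. intros n Hn. apply HN.
  assert (H := incr_ge s Hs n). lia.
Qed.


Definition SUP (A : R2 -> Prop) (f : R2 -> R) : Rbar :=
  Lub_Rbar (fun r => exists a, A a /\ r = f a).

Lemma SUP_ub (A : R2 -> Prop) (f : R2 -> R) a : A a -> Rbar_le (f a) (SUP A f).
Proof.
  intros Ha. destruct (Lub_Rbar_correct (fun r => exists a, A a /\ r = f a)) as [H _].
  apply H. exists a; auto.
Qed.

Lemma SUP_least (A : R2 -> Prop) (f : R2 -> R) (b : Rbar) : (forall a, A a -> Rbar_le (f a) b) -> Rbar_le (SUP A f) b.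
Proof.
  intros H. destruct (Lub_Rbar_correct (fun r => exists a, A a /\ r = f a)) as [_ H2].
  apply H2. intros x [a [Ha ->]]. apply H; auto.
Qed.

Lemma nat_big x : exists N, forall n, (N <= n)%nat -> x < INR n.
Proof.
  destruct (archimed (Rabs x)) as [H1 _].
  assert (0 <= IZR (up (Rabs x))) by (generalize (Rabs_pos x); lra).
  exists (Z.to_nat (up (Rabs x))). intros n Hn.
  assert (HN : IZR (up (Rabs x)) <= INR n).
  { rewrite <- (Z2Nat.id (up (Rabs x))). rewrite <- INR_IZR_INZ. apply le_INR. auto.
    apply le_IZR. exact H. }
  generalize (Rle_abs x). lra.
Qed.

Definition exceeds (A : R2 -> Prop) (f : R2 -> R) (q : nat -> R2) : Prop :=
  forall x : R, Rbar_lt x (SUP A f) -> exists N, forall n, (N <= n)%nat -> x < f (q n).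

Lemma sup_seq (A : R2 -> Prop) (f : R2 -> R) : (exists a, A a) ->
  exists q : nat -> R2, (forall n, A (q n)) /\ exceeds A f q.
Proof.
  intros [a0 Ha0]. unfold exceeds.
  destruct (SUP A f) as [s| |] eqn:ES.
  - assert (H : forall n, exists a, A a /\ s - / INR (S n) < f a).
    { intros n. apply NNPP. intros Hn.
      assert (Hle : Rbar_le (SUP A f) (s - / INR (S n))).
      { apply SUP_least. intros a Ha. unfold Rbar_le. apply Rnot_lt_le. intros Hc. apply Hn. exists a; auto. }
      rewrite ES in Hle. unfold Rbar_le in Hle.
      assert (0 < / INR (S n)) by (apply Rinv_0_lt_compat; apply lt_0_INR; lia). lra. }
    destruct (choice_nat _ H) as [q Hq]. exists q. split. intros n; apply Hq.
    intros x Hx. simpl in Hx. destruct (inv_small (s - x)) as [N HN]. lra.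
    exists N. intros n Hn. specialize (HN n Hn). destruct (Hq n). lra.
  - assert (H : forall n, exists a, A a /\ INR n < f a).
    { intros n. apply NNPP. intros Hn.
      assert (Hle : Rbar_le (SUP A f) (INR n)).
      { apply SUP_least. intros a Ha. unfold Rbar_le. apply Rnot_lt_le. intros Hc. apply Hn. exists a; auto. }
      rewrite ES in Hle. unfold Rbar_le in Hle. exact Hle. }
    destruct (choice_nat _ H) as [q Hq]. exists q. split. intros n; apply Hq.
    intros x _. destruct (nat_big x) as [N HN]. exists N. intros n Hn.
    specialize (HN n Hn). destruct (Hq n). lra.
  - exfalso. assert (H := SUP_ub A f a0 Ha0). rewrite ES in H. exact H.
Qed.

Lemma exceeds_sub (A : R2 -> Prop) (f : R2 -> R) q s : (forall k, (s k < s (S k))%nat) -> exceeds A f q -> exceeds A f (fun k => q (s k)).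
Proof.
  intros Hs H x Hx. destruct (H x Hx) as [N HN]. exists N. intros n Hn. apply HN.
  assert (Hg := incr_ge s Hs n). lia.
Qed.

Lemma attain (A : R2 -> Prop) (f : R2 -> R) (B : R) :
  (exists a, A a) -> (forall a, A a -> Rabs (fst a) <= B /\ Rabs (snd a) <= B) ->
  (forall q l, (forall n, A (q n)) -> conv q l -> exceeds A f q -> A l /\ ceps f l) ->
  exists p, A p /\ forall a, A a -> f a <= f p.
Proof.
  intros Hne HB Hlim.
  destruct (sup_seq A f Hne) as [q [Hq Hex]].
  destruct (BW2 q B (fun n => HB _ (Hq n))) as [s [Hs [l Hl]]].
  destruct (Hlim (fun k => q (s k)) l (fun k => Hq (s k)) Hl (exceeds_sub A f q s Hs Hex)) as [Al Cl].
  exists l. split; auto.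
  assert (Hge : Rbar_le (SUP A f) (f l)).
  { destruct (SUP A f) as [S| |] eqn:ES; simpl; auto.
    - apply Rnot_lt_le. intros Hc.
      destruct (Hex (((f l) + S)/2)) as [N1 HN1]. rewrite ES; simpl; lra.
      destruct (conv_ceps _ _ _ Hl Cl (((f l) + S)/2 - f l)) as [N2 HN2]. lra.
      specialize (HN1 (s (max N1 N2))). specialize (HN2 (max N1 N2)).
      assert (Hg := incr_ge s Hs (max N1 N2)).
      assert (H1 := HN1 ltac:(lia)). assert (H2 := HN2 ltac:(lia)).
      revert H2; unfold Rabs; destruct (Rcase_abs _); lra.
    - destruct (Hex (f l + 1)) as [N1 HN1]. rewrite ES; simpl; auto.
      destruct (conv_ceps _ _ _ Hl Cl 1) as [N2 HN2]. lra.
      specialize (HN1 (s (max N1 N2))). specialize (HN2 (max N1 N2)).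
      assert (Hg := incr_ge s Hs (max N1 N2)).
      assert (H1 := HN1 ltac:(lia)). assert (H2 := HN2 ltac:(lia)).
      revert H2; unfold Rabs; destruct (Rcase_abs _); lra. }
  intros a Ha. assert (H := SUP_ub A f a Ha).
  assert (H2 := Rbar_le_trans _ _ _ H Hge). exact H2.
Qed.

Lemma SUP_max (A : R2 -> Prop) (f : R2 -> R) p : A p -> (forall a, A a -> f a <= f p) -> SUP A f = Finite (f p).
Proof.
  intros Hp H. apply Rbar_le_antisym.
  - apply SUP_least. intros a Ha; simpl; auto.
  - apply SUP_ub; auto.
Qed.


Lemma dist2_self p : dist2 p p = 0.
Proof. unfold dist2. replace ((fst p - fst p) ^ 2 + (snd p - snd p) ^ 2) with 0 by ring. apply sqrt_0. Qed.

Lemma limit_boundary (O : R2 -> Prop) q l : (forall n, O (q n)) -> conv q l -> ~ O l -> boundary2 O l.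
Proof.
  intros Hq Hl Hn. split.
  - intros e He. destruct (Hl (e/2)) as [N HN]. lra. exists (q N). split; auto.
    apply near_dist2. apply HN. lia.
  - intros e He. exists l. split; auto. rewrite dist2_self. auto.
Qed.

Lemma boundary_exists (O : R2 -> Prop) : (exists p, O p) -> bounded2 O -> exists b, boundary2 O b.
Proof.
  intros [p0 Hp0] Hb. destruct (bounded_comp O Hb) as [B HB].
  set (E := fun s => 0 <= s /\ O (fst p0 + s, snd p0)).
  assert (HbE : bound E).
  { exists (B - fst p0). intros s [Hs1 Hs2]. destruct (HB _ Hs2) as [H1 _]. simpl in H1.
    revert H1; unfold Rabs; destruct (Rcase_abs _); lra. }
  assert (HE0 : E 0). { split. lra. replace (fst p0 + 0) with (fst p0) by ring. destruct p0; exact Hp0. }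
  destruct (completeness E HbE (ex_intro _ 0 HE0)) as [m [Hm1 Hm2]].
  assert (Hm0 : 0 <= m) by (apply Hm1; auto).
  exists (fst p0 + m, snd p0). split.
  - intros e He.
    assert (Hx : exists s, E s /\ m - e/2 < s).
    { apply NNPP. intros Hc. assert (m <= m - e/2). apply Hm2. intros s Hs.
      apply Rnot_lt_le. intros Hs'. apply Hc. exists s. auto. lra. }
    destruct Hx as [s [[Hs0 Hs] Hs']]. assert (s <= m) by (apply Hm1; split; auto).
    exists (fst p0 + s, snd p0). split; auto. apply near_dist2. unfold near; simpl.
    replace (snd p0 - snd p0) with 0 by ring. rewrite Rabs_R0.
    split; [rewrite Rabs_left1|]; lra.
  - intros e He. exists (fst p0 + m + e/4, snd p0). split.
    + intros Ho. assert (m + e/4 <= m). apply Hm1. split. lra.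
      replace (fst p0 + (m + e/4)) with (fst p0 + m + e/4) by ring. exact Ho. lra.
    + apply near_dist2. unfold near; simpl.
      replace (fst p0 + m + e / 4 - (fst p0 + m)) with (e/4) by ring.
      replace (snd p0 - snd p0) with 0 by ring. rewrite Rabs_R0. rewrite Rabs_pos_eq; lra.
Qed.

Lemma glb_correct (E : Rbar -> Prop) : Rbar_is_glb E (Rbar_glb E).
Proof. unfold Rbar_glb. destruct (Rbar_ex_glb E); auto. Qed.

Lemma limsup_le (O : R2 -> Prop) (g : R2 -> R) b :
  Rbar_le (limsup_on O g b) (sup_on O g).
Proof.
  unfold limsup_on.
  destruct (glb_correct (fun s => exists eps : R, 0 < eps /\
     s = sup_on (fun x => O x /\ dist2 x b < eps) g)) as [H1 _].
  eapply Rbar_le_trans. apply H1. exists 1. split. lra. reflexivity.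
  apply (SUP_least _ g). intros a [Ha _]. apply (SUP_ub O g a Ha).
Qed.

Lemma limsup_lt (O : R2 -> Prop) (g : R2 -> R) b :
  boundary2 O b -> Rbar_lt (limsup_on O g b) (sup_on O g) ->
  exists e, 0 < e /\ exists m : R, Rbar_lt m (SUP O g) /\ forall q, O q -> near b q e -> g q <= m.
Proof.
  intros Hb Hlt. unfold limsup_on in Hlt.
  set (E := fun s => exists eps : R, 0 < eps /\
     s = sup_on (fun x => O x /\ dist2 x b < eps) g) in *.
  assert (Hx : exists s, E s /\ Rbar_lt s (sup_on O g)).
  { apply NNPP. intros Hc.
    assert (Hl : Rbar_le (sup_on O g) (Rbar_glb E)).
    { destruct (glb_correct E) as [_ H2]. apply H2. intros s Hs.
      apply Rbar_not_lt_le. intros Hs'. apply Hc. exists s; auto. }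
    apply (Rbar_lt_not_le _ _ Hlt Hl). }
  destruct Hx as [s [[eps [Heps ->]] Hs]].
  destruct (proj1 Hb eps Heps) as [q0 [Hq0 Hq0']].
  assert (Hge : Rbar_le (g q0) (sup_on (fun x => O x /\ dist2 x b < eps) g)).
  { apply (SUP_ub (fun x => O x /\ dist2 x b < eps) g q0). auto. }
  destruct (sup_on (fun x => O x /\ dist2 x b < eps) g) as [m| |] eqn:Em.
  - exists (eps/2). split. lra. exists m. split. exact Hs.
    intros q Hq Hn. assert (H := SUP_ub (fun x => O x /\ dist2 x b < eps) g q).
    unfold sup_on in Em. unfold SUP in H. rewrite Em in H. apply H. split; auto.
    apply near_dist2. exact Hn.
  - destruct (sup_on O g); simpl in Hs; contradiction.
  - simpl in Hge. contradiction.
Qed.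


Lemma cont_lin (f g : R2 -> R) (t : R) x : continuous f x -> continuous g x ->
  continuous (fun y => f y + t * g y) x.
Proof.
  intros Hf Hg.
  apply (continuous_plus f (fun y => t * g y)); auto.
  apply (continuous_scal (fun _ => t) g); auto. apply continuous_const.
Qed.

Lemma cont_psi2 (psi : R2 -> R) (f g : R2 -> R) x : (forall z, continuous psi z) ->
  continuous f x -> continuous g x -> continuous (fun y => psi (f y, g y)) x.
Proof.
  intros Hp Hf Hg.
  apply (continuous_comp_2 f g (fun a b => psi (a, b))); auto.
  eapply continuous_ext. 2: apply Hp. intros [a b]; reflexivity.
Qed.

Lemma cont_D (f g : R2 -> R) a b x : continuous f x -> continuous g x ->
  continuous (fun y => (f y - a) ^ 2 + (g y - b) ^ 2) x.
Proof.
  intros Hf Hg.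
  assert (Hf' : continuous (fun y => f y - a) x).
  { apply (continuous_minus f (fun _ => a)); auto. apply continuous_const. }
  assert (Hg' : continuous (fun y => g y - b) x).
  { apply (continuous_minus g (fun _ => b)); auto. apply continuous_const. }
  apply (continuous_ext (fun y => (f y - a) * (f y - a) + (g y - b) * (g y - b))).
  intros y. simpl. ring.
  apply (continuous_plus (fun y => (f y - a) * (f y - a)) (fun y => (g y - b) * (g y - b))).
  apply (continuous_mult (fun y => f y - a) (fun y => f y - a)); auto.
  apply (continuous_mult (fun y => g y - b) (fun y => g y - b)); auto.
Qed.


Lemma Ft_conv (psi u v a b : R2 -> R) l (q : nat -> R2) (tt : nat -> R) :
  (forall z, continuous psi z) -> continuous u l -> continuous v l ->
  continuous a l -> continuous b l -> conv q l ->
  (forall e, 0 < e -> exists N, forall k, (N <= k)%nat -> Rabs (tt k) < e) ->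
  forall e, 0 < e -> exists N, forall k, (N <= k)%nat ->
    Rabs (psi (u (q k) + tt k * a (q k), v (q k) + tt k * b (q k)) - psi (u l, v l)) < e.
Proof.
  intros Hpsi Hu Hv Ha Hb Hq Ht e He.
  destruct (cont_ceps psi (u l, v l) (Hpsi _) e He) as [d [Hd Hd']].
  destruct (cont_ceps u l Hu (d/2)) as [du [Hdu Hdu']]. lra.
  destruct (cont_ceps v l Hv (d/2)) as [dv [Hdv Hdv']]. lra.
  destruct (cont_ceps a l Ha 1) as [da [Hda Hda']]. lra.
  destruct (cont_ceps b l Hb 1) as [db [Hdb Hdb']]. lra.
  set (K := Rabs (a l) + Rabs (b l) + 2).
  assert (HK : 0 < K) by (unfold K; generalize (Rabs_pos (a l)) (Rabs_pos (b l)); lra).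
  destruct (Hq (Rmin (Rmin du dv) (Rmin da db))) as [N1 HN1].
  { repeat apply Rmin_pos; auto. }
  destruct (Ht (d / (2 * K))) as [N2 HN2].
  { apply Rdiv_lt_0_compat; lra. }
  exists (max N1 N2). intros k Hk.
  specialize (HN1 k ltac:(lia)). specialize (HN2 k ltac:(lia)).
  assert (Hm1 := Rmin_l (Rmin du dv) (Rmin da db)). assert (Hm2 := Rmin_r (Rmin du dv) (Rmin da db)).
  assert (Hm3 := Rmin_l du dv). assert (Hm4 := Rmin_r du dv).
  assert (Hm5 := Rmin_l da db). assert (Hm6 := Rmin_r da db).
  assert (H1 := Hdu' (q k) (near_mono _ _ _ du HN1 ltac:(lra))).
  assert (H2 := Hdv' (q k) (near_mono _ _ _ dv HN1 ltac:(lra))).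
  assert (H3 := Hda' (q k) (near_mono _ _ _ da HN1 ltac:(lra))).
  assert (H4 := Hdb' (q k) (near_mono _ _ _ db HN1 ltac:(lra))).
  apply Hd'. unfold near; simpl.
  assert (Hta : Rabs (tt k * a (q k)) <= d / 2).
  { rewrite Rabs_mult.
    assert (Rabs (a (q k)) <= K).
    { unfold K. assert (H5 := Rabs_triang_inv (a (q k)) (a l)). generalize (Rabs_pos (b l)). lra. }
    apply Rle_trans with (d / (2 * K) * K).
    apply Rmult_le_compat; try apply Rabs_pos; lra.
    right; field; lra. }
  assert (Htb : Rabs (tt k * b (q k)) <= d / 2).
  { rewrite Rabs_mult.
    assert (Rabs (b (q k)) <= K).
    { unfold K. assert (H5 := Rabs_triang_inv (b (q k)) (b l)). generalize (Rabs_pos (a l)). lra. }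
    apply Rle_trans with (d / (2 * K) * K).
    apply Rmult_le_compat; try apply Rabs_pos; lra.
    right; field; lra. }
  split.
  - replace (u (q k) + tt k * a (q k) - u l) with ((u (q k) - u l) + tt k * a (q k)) by ring.
    eapply Rle_lt_trans. apply Rabs_triang. lra.
  - replace (v (q k) + tt k * b (q k) - v l) with ((v (q k) - v l) + tt k * b (q k)) by ring.
    eapply Rle_lt_trans. apply Rabs_triang. lra.
Qed.


Lemma abs_prod_ge a e k s : Rabs e <= k * s -> - (Rabs a * (k * s)) <= a * e.
Proof.
  intros H. assert (H1 := Rabs_pos a).
  assert (Rabs (a * e) <= Rabs a * (k * s)).
  { rewrite Rabs_mult. apply Rmult_le_compat_l; auto. }
  revert H0; unfold Rabs at 1; destruct (Rcase_abs (a * e)); lra.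
Qed.

Lemma local_contra (O : R2 -> Prop) (alpha alphax alphay beta betax betay
    u ux uy v vx vy psi : R2 -> R) (t Mt r : R) (z0 p : R2) :
  open O -> C1_on O alpha alphax alphay -> C1_on O beta betax betay ->
  C1_on O u ux uy -> C1_on O v vx vy -> O p -> 0 < r ->
  (forall z, continuous psi z) -> quasi_convex psi ->
  (forall q, near p q r -> psi (u q + t * alpha q, v q + t * beta q) <= Mt) ->
  psi (u p + t * alpha p, v p + t * beta p) = Mt ->
  psi z0 < Mt ->
  (forall q, near p q r -> psi (u q + t * alpha q, v q + t * beta q) = Mt ->
     (u q + t * alpha q - fst z0) ^ 2 + (v q + t * beta q - snd z0) ^ 2 <=
     (u p + t * alpha p - fst z0) ^ 2 + (v p + t * beta p - snd z0) ^ 2) ->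
  (ux p + t * alphax p) * (vy p + t * betay p) - (uy p + t * alphay p) * (vx p + t * betax p) <> 0 ->
  False.
Proof.
  intros HO Ha Hb Hu Hv Hp Hr Hpsi Hqc Hle HMt Hz0 HD Hdet.
  set (w1 := u p + t * alpha p - fst z0). set (w2 := v p + t * beta p - snd z0).
  assert (HW : 0 < w1 ^ 2 + w2 ^ 2).
  { destruct (Req_dec w1 0) as [E1|E1]; [destruct (Req_dec w2 0) as [E2|E2]|]; try nra.
    exfalso. assert (Hz : (u p + t * alpha p, v p + t * beta p) = z0).
    { destruct z0 as [z1 z2]. unfold w1, w2 in *; simpl in *. f_equal; lra. }
    rewrite Hz in HMt. lra. }
  set (A := ux p + t * alphax p). set (B := uy p + t * alphay p).
  set (C := vx p + t * betax p). set (Dd := vy p + t * betay p).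
  fold A B C Dd in Hdet.
  set (v1 := (Dd * w1 - B * w2) / (A * Dd - B * C)).
  set (v2 := (A * w2 - C * w1) / (A * Dd - B * C)).
  assert (Hv1 : A * v1 + B * v2 = w1) by (unfold v1, v2; field; auto).
  assert (Hv2 : C * v1 + Dd * v2 = w2) by (unfold v1, v2; field; auto).
  destruct (cont_ceps psi z0 (Hpsi z0) (Mt - psi z0)) as [dz [Hdz Hdz']]. lra.
  set (S := Rabs w1 + Rabs w2).
  assert (HS : 0 <= S) by (unfold S; generalize (Rabs_pos w1) (Rabs_pos w2); lra).
  set (k := Rmin (dz / 2) ((w1 ^ 2 + w2 ^ 2) / (4 * S + 1))).
  assert (Hk : 0 < k).
  { unfold k. apply Rmin_pos. lra. apply Rdiv_lt_0_compat; lra. }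
  assert (Hk1 : k < dz) by (unfold k; generalize (Rmin_l (dz / 2) ((w1 ^ 2 + w2 ^ 2) / (4 * S + 1))); lra).
  assert (Hk2 : k * S < (w1 ^ 2 + w2 ^ 2) / 4).
  { assert (k <= (w1 ^ 2 + w2 ^ 2) / (4 * S + 1)) by apply Rmin_r.
    apply Rle_lt_trans with ((w1 ^ 2 + w2 ^ 2) / (4 * S + 1) * S).
    apply Rmult_le_compat_r; auto.
    apply Rmult_lt_reg_r with (4 * (4 * S + 1)). lra.
    replace ((w1 ^ 2 + w2 ^ 2) / (4 * S + 1) * S * (4 * (4 * S + 1))) with ((w1 ^ 2 + w2 ^ 2) * S * 4) by (field; lra).
    replace ((w1 ^ 2 + w2 ^ 2) / 4 * (4 * (4 * S + 1))) with ((w1 ^ 2 + w2 ^ 2) * (4 * S + 1)) by field.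
    nra. }
  set (k' := k / (1 + Rabs t)).
  assert (Hk' : 0 < k') by (unfold k'; apply Rdiv_lt_0_compat; generalize (Rabs_pos t); lra).
  assert (Hkk : k' + Rabs t * k' = k) by (unfold k'; field; generalize (Rabs_pos t); lra).
  destruct (dir_deriv O u ux uy p v1 v2 k' HO Hu Hp Hk') as [s1 [Hs1 Hs1']].
  destruct (dir_deriv O alpha alphax alphay p v1 v2 k' HO Ha Hp Hk') as [s2 [Hs2 Hs2']].
  destruct (dir_deriv O v vx vy p v1 v2 k' HO Hv Hp Hk') as [s3 [Hs3 Hs3']].
  destruct (dir_deriv O beta betax betay p v1 v2 k' HO Hb Hp Hk') as [s4 [Hs4 Hs4']].
  set (V := Rabs v1 + Rabs v2 + 1).
  assert (HV : 0 < V) by (unfold V; generalize (Rabs_pos v1) (Rabs_pos v2); lra).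
  set (s := Rmin (Rmin (Rmin s1 s2) (Rmin s3 s4)) (Rmin (r / (2 * V)) 1) / 2).
  assert (Hs0 : 0 < s).
  { unfold s. assert (0 < r / (2 * V)) by (apply Rdiv_lt_0_compat; lra).
    assert (0 < Rmin (Rmin (Rmin s1 s2) (Rmin s3 s4)) (Rmin (r / (2 * V)) 1)).
    { repeat apply Rmin_pos; lra. } lra. }
  assert (Hsm : Rmin (Rmin (Rmin s1 s2) (Rmin s3 s4)) (Rmin (r / (2 * V)) 1) = 2 * s) by (unfold s; field).
  assert (Hm1 := Rmin_l (Rmin (Rmin s1 s2) (Rmin s3 s4)) (Rmin (r / (2 * V)) 1)).
  assert (Hm2 := Rmin_r (Rmin (Rmin s1 s2) (Rmin s3 s4)) (Rmin (r / (2 * V)) 1)).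
  assert (Hm3 := Rmin_l (Rmin s1 s2) (Rmin s3 s4)). assert (Hm4 := Rmin_r (Rmin s1 s2) (Rmin s3 s4)).
  assert (Hm5 := Rmin_l s1 s2). assert (Hm6 := Rmin_r s1 s2).
  assert (Hm7 := Rmin_l s3 s4). assert (Hm8 := Rmin_r s3 s4).
  assert (Hm9 := Rmin_l (r / (2 * V)) 1). assert (Hm10 := Rmin_r (r / (2 * V)) 1).
  set (q := (fst p + s * v1, snd p + s * v2)).
  assert (Hsv : s * V < r).
  { assert (s <= r / (2 * V) / 2) by lra.
    apply Rle_lt_trans with (r / (2 * V) / 2 * V). apply Rmult_le_compat_r; lra.
    replace (r / (2 * V) / 2 * V) with (r / 4) by (field; lra). lra. }
  assert (Hq : near p q r).
  { unfold near, q; simpl. split.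
    - replace (fst p + s * v1 - fst p) with (s * v1) by ring. rewrite Rabs_mult, (Rabs_pos_eq s) by lra.
      unfold V in Hsv. generalize (Rabs_pos v2). nra.
    - replace (snd p + s * v2 - snd p) with (s * v2) by ring. rewrite Rabs_mult, (Rabs_pos_eq s) by lra.
      unfold V in Hsv. generalize (Rabs_pos v1). nra. }
  set (e1 := u q + t * alpha q - (u p + t * alpha p) - s * w1).
  set (e2 := v q + t * beta q - (v p + t * beta p) - s * w2).
  assert (He1 : Rabs e1 <= k * s).
  { assert (H1 := Hs1' s ltac:(lra)). assert (H2 := Hs2' s ltac:(lra)).
    fold q in H1, H2.
    replace e1 with ((u q - u p - s * (v1 * ux p + v2 * uy p)) + t * (alpha q - alpha p - s * (v1 * alphax p + v2 * alphay p))).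
    2:{ unfold e1. rewrite <- Hv1. unfold A, B. ring. }
    eapply Rle_trans. apply Rabs_triang. rewrite Rabs_mult.
    assert (Rabs t * Rabs (alpha q - alpha p - s * (v1 * alphax p + v2 * alphay p)) <= Rabs t * (k' * s)).
    { apply Rmult_le_compat_l; auto. apply Rabs_pos. }
    rewrite <- Hkk. lra. }
  assert (He2 : Rabs e2 <= k * s).
  { assert (H1 := Hs3' s ltac:(lra)). assert (H2 := Hs4' s ltac:(lra)).
    fold q in H1, H2.
    replace e2 with ((v q - v p - s * (v1 * vx p + v2 * vy p)) + t * (beta q - beta p - s * (v1 * betax p + v2 * betay p))).
    2:{ unfold e2. rewrite <- Hv2. unfold C, Dd. ring. }
    eapply Rle_trans. apply Rabs_triang. rewrite Rabs_mult.
    assert (Rabs t * Rabs (beta q - beta p - s * (v1 * betax p + v2 * betay p)) <= Rabs t * (k' * s)).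
    { apply Rmult_le_compat_l; auto. apply Rabs_pos. }
    rewrite <- Hkk. lra. }
  destruct (Rle_lt_or_eq_dec _ _ (Hle q Hq)) as [Hlt|Heq].
  -
    set (z' := (fst z0 - e1 / s, snd z0 - e2 / s)).
    assert (Hz' : psi z' < Mt).
    { assert (H := Hdz' z').
      assert (Rabs (fst z0 - e1 / s - fst z0) < dz).
      { replace (fst z0 - e1 / s - fst z0) with (- (e1 / s)) by ring. rewrite Rabs_Ropp.
        unfold Rdiv. rewrite Rabs_mult. rewrite (Rabs_pos_eq (/ s)) by (left; apply Rinv_0_lt_compat; lra).
        apply Rle_lt_trans with k; [|lra].
        apply Rmult_le_reg_r with s. lra. rewrite Rmult_assoc, Rinv_l by lra. lra. }
      assert (Rabs (snd z0 - e2 / s - snd z0) < dz).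
      { replace (snd z0 - e2 / s - snd z0) with (- (e2 / s)) by ring. rewrite Rabs_Ropp.
        unfold Rdiv. rewrite Rabs_mult. rewrite (Rabs_pos_eq (/ s)) by (left; apply Rinv_0_lt_compat; lra).
        apply Rle_lt_trans with k; [|lra].
        apply Rmult_le_reg_r with s. lra. rewrite Rmult_assoc, Rinv_l by lra. lra. }
      assert (Hn : near z0 z' dz) by (unfold near, z'; simpl; auto).
      specialize (H Hn). revert H; unfold Rabs; destruct (Rcase_abs _); lra. }
    set (y := (u q + t * alpha q, v q + t * beta q)).
    set (rr := Rmax (psi y) (psi z')).
    assert (Hrr : rr < Mt) by (unfold rr; apply Rmax_lub_lt; auto).
    assert (Hcv := Hqc rr y z' (s / (1 + s)) (Rmax_l _ _) (Rmax_r _ _)).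
    assert (Hcomb : ((1 - s / (1 + s)) * fst y + s / (1 + s) * fst z',
                     (1 - s / (1 + s)) * snd y + s / (1 + s) * snd z') = (u p + t * alpha p, v p + t * beta p)).
    { unfold y, z'; simpl. f_equal.
      - replace (u q + t * alpha q) with (u p + t * alpha p + s * w1 + e1) by (unfold e1; ring).
        unfold w1. field. lra.
      - replace (v q + t * beta q) with (v p + t * beta p + s * w2 + e2) by (unfold e2; ring).
        unfold w2. field. lra. }
    assert (Hst : 0 <= s / (1 + s) <= 1).
    { split. apply Rdiv_le_0_compat; lra. apply Rmult_le_reg_r with (1 + s). lra.
      unfold Rdiv. rewrite Rmult_assoc, Rinv_l by lra. lra. }
    specialize (Hcv Hst). rewrite Hcomb in Hcv. lra.
  - assert (H := HD q Hq Heq). fold w1 w2 in H.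
    replace (u q + t * alpha q - fst z0) with ((1 + s) * w1 + e1) in H by (unfold e1, w1; ring).
    replace (v q + t * beta q - snd z0) with ((1 + s) * w2 + e2) in H by (unfold e2, w2; ring).
    assert (H1 := abs_prod_ge w1 e1 k s He1). assert (H2 := abs_prod_ge w2 e2 k s He2).
    assert (Hks : Rabs w1 * (k * s) + Rabs w2 * (k * s) = k * S * s) by (unfold S; ring).
    assert (Hsle : s <= 1) by lra.
    assert (H3 : (1 + s) * (w1 * e1 + w2 * e2) >= - ((1 + s) * (k * S * s))).
    { apply Rle_ge. replace (- ((1 + s) * (k * S * s))) with ((1 + s) * (- (k * S * s))) by ring.
      apply Rmult_le_compat_l; lra. }
    assert (H4 : (1 + s) * (k * S * s) < (1 + s) * s * ((w1 ^ 2 + w2 ^ 2) / 4)).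
    { replace ((1 + s) * (k * S * s)) with ((1 + s) * s * (k * S)) by ring.
      apply Rmult_lt_compat_l. nra. lra. }
    nra.
Qed.


Lemma conv_const p : conv (fun _ => p) p.
Proof. intros e He. exists 0%nat. intros n _. unfold near. unfold Rminus. rewrite !Rplus_opp_r, Rabs_R0. auto. Qed.

Lemma tt_small : forall e, 0 < e -> exists N, forall k, (N <= k)%nat -> Rabs (/ INR (S k)) < e.
Proof.
  intros e He. destruct (inv_small e He) as [N HN]. exists N. intros k Hk.
  rewrite Rabs_pos_eq. auto. left. apply Rinv_0_lt_compat, lt_0_INR. lia.
Qed.

Lemma det_nz (a ax ay b bx by' ux uy vx vy h t : R) :
  Rabs (ax * by' - ay * bx) + Rabs h > 0 -> (ax * by' - ay * bx) * h >= 0 ->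
  ux * vy - uy * vx = h -> by' * ux - bx * uy - ay * vx + ax * vy = 0 -> 0 < t ->
  (ux + t * ax) * (vy + t * by') - (uy + t * ay) * (vx + t * bx) <> 0.
Proof.
  intros H1 H2 H3 H4 Ht.
  replace ((ux + t * ax) * (vy + t * by') - (uy + t * ay) * (vx + t * bx))
    with ((ux * vy - uy * vx) + t * (by' * ux - bx * uy - ay * vx + ax * vy) + t * t * (ax * by' - ay * bx)) by ring.
  rewrite H3, H4. set (J := ax * by' - ay * bx) in *.
  destruct (Req_dec h 0) as [Eh|Eh].
  - rewrite Eh in *. rewrite Rabs_R0 in H1. assert (J <> 0).
    { intro E; rewrite E, Rabs_R0 in H1; lra. }
    intro E. assert (t * t * J = 0) by lra. apply Rmult_integral in H0. destruct H0; [nra|auto].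
  - intro E. assert (h * (h + t * 0 + t * t * J) = 0) by (rewrite E; ring).
    assert (0 < h * h) by (apply Rsqr_pos_lt in Eh; unfold Rsqr in Eh; auto).
    assert (0 <= t * t) by nra. nra.
Qed.

Lemma main_contra (O : R2 -> Prop) (h alpha alphax alphay beta betax betay
    u ux uy v vx vy psi : R2 -> R) :
  open O -> (exists p, O p) -> bounded2 O ->
  C1_on O alpha alphax alphay -> C1_on O beta betax betay ->
  (forall p, O p ->
     Rabs (alphax p * betay p - alphay p * betax p) + Rabs (h p) > 0) ->
  (forall p, O p -> (alphax p * betay p - alphay p * betax p) * h p >= 0) ->
  C1_on O u ux uy -> C1_on O v vx vy ->
  (forall p, O p -> ux p * vy p - uy p * vx p = h p) ->
  (forall p, O p ->
     betay p * ux p - betax p * uy p - alphay p * vx p + alphax p * vy p = 0) ->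
  (forall z, continuous psi z) -> quasi_convex psi ->
  (forall b, boundary2 O b -> exists e, 0 < e /\ exists m : R,
      Rbar_lt m (SUP O (fun x => psi (u x, v x))) /\
      forall q, O q -> near b q e -> psi (u q, v q) <= m) ->
  False.
Proof.
  intros HO Hne Hbd Ha Hb HJ Hsg Hu Hv E1 E2 Hpsi Hqc H2.
  destruct (bounded_comp O Hbd) as [Bd HBd].
  assert (cu : forall q, O q -> continuous u q) by (intros q Hq; exact (proj1 (proj2 (proj2 (Hu q Hq))))).
  assert (cv : forall q, O q -> continuous v q) by (intros q Hq; exact (proj1 (proj2 (proj2 (Hv q Hq))))).
  assert (ca : forall q, O q -> continuous alpha q) by (intros q Hq; exact (proj1 (proj2 (proj2 (Ha q Hq))))).
  assert (cb : forall q, O q -> continuous beta q) by (intros q Hq; exact (proj1 (proj2 (proj2 (Hb q Hq))))).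
  pose (phi := fun x => psi (u x, v x)).
  assert (Cphi : forall q, O q -> ceps phi q).
  { intros q Hq. apply cont_ceps. apply cont_psi2; auto. }
  pose (ph := fun t x => psi (u x + t * alpha x, v x + t * beta x)).
  assert (Cph : forall t q, O q -> ceps (ph t) q).
  { intros t q Hq. apply cont_ceps. apply cont_psi2; auto; apply cont_lin; auto. }
  destruct (attain O phi Bd Hne HBd) as [p0 [Hp0 Hmax]].
  { intros q l Hq Hl Hex. destruct (classic (O l)) as [Ol|nOl]. split; auto.
    exfalso. destruct (H2 l (limit_boundary O q l Hq Hl nOl)) as [e [He [m [Hm Hmq]]]].
    destruct (Hex m Hm) as [N1 HN1]. destruct (Hl e He) as [N2 HN2].
    specialize (HN1 (max N1 N2) ltac:(lia)).
    specialize (Hmq (q (max N1 N2)) (Hq _) (HN2 (max N1 N2) ltac:(lia))). unfold phi in HN1; cbv beta in HN1. lra. }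
  pose (M := phi p0).
  assert (HS : SUP O phi = Finite M) by exact (SUP_max O phi p0 Hp0 Hmax).
  assert (H3 : forall b, boundary2 O b -> exists e, 0 < e /\ exists m, m < M /\
                 forall q, O q -> near b q e -> phi q <= m).
  { intros b Hb'. destruct (H2 b Hb') as [e [He [m [Hm Hq]]]]. exists e; split; auto.
    exists m; split; auto. change (Rbar_lt m (SUP O phi)) in Hm. rewrite HS in Hm. exact Hm. }
  destruct (classic (exists z0, psi z0 < M)) as [[z0 Hz0]|Hnd].
  2:{ destruct (boundary_exists O Hne Hbd) as [b Hb'].
      destruct (H3 b Hb') as [e [He [m [Hm Hq]]]].
      destruct (proj1 Hb' e He) as [q [Hq1 Hq2]].
      assert (Hn := dist2_near b q e Hq2). specialize (Hq q Hq1 Hn).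
      assert (M <= phi q) by (apply Rnot_lt_le; intro; apply Hnd; exists (u q, v q); auto). lra. }
  assert (HU : exists c, c < M /\ exists d, 0 < d /\
             forall q, O q -> c <= phi q -> forall y, near q y d -> O y).
  { apply NNPP; intro Hc.
    assert (Hn : forall n, exists qy : R2 * R2, O (fst qy) /\ M - / INR (S n) <= phi (fst qy) /\
               near (fst qy) (snd qy) (/ INR (S n)) /\ ~ O (snd qy)).
    { intro n. assert (Hpos : 0 < / INR (S n)) by (apply Rinv_0_lt_compat, lt_0_INR; lia).
      apply NNPP; intro Hn. apply Hc. exists (M - / INR (S n)). split. lra.
      exists (/ INR (S n)). split. auto. intros q Hq Hcq y Hy. apply NNPP. intros Hy'.
      apply Hn. exists (q, y); simpl; auto. }
    destruct (choice_nat _ Hn) as [qy Hqy].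
    destruct (BW2 (fun n => fst (qy n)) Bd (fun n => HBd _ (proj1 (Hqy n)))) as [s [Hs [l Hl]]].
    destruct (classic (O l)) as [Ol|nOl].
    - destruct (open_near O l HO Ol) as [d [Hd Hd']].
      destruct (Hl (d/2)) as [N1 HN1]. lra. destruct (inv_small (d/2)) as [N2 HN2]. lra.
      pose (k := max N1 N2). destruct (Hqy (s k)) as [_ [_ [Hnr Hno]]]. apply Hno. apply Hd'.
      replace d with (d/2 + d/2) by field. eapply near_trans. exact (HN1 k ltac:(unfold k; lia)).
      eapply near_mono. exact Hnr.
      left. eapply Rle_lt_trans. apply inv_S_mono. apply (incr_ge s Hs k). apply HN2; unfold k; lia.
    - destruct (H3 l (limit_boundary O _ l (fun k => proj1 (Hqy (s k))) Hl nOl)) as [e [He [m [Hm Hmq]]]].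
      destruct (Hl e He) as [N1 HN1]. destruct (inv_small (M - m)) as [N2 HN2]. lra.
      pose (k := max N1 N2). destruct (Hqy (s k)) as [Ho [Hge _]].
      specialize (Hmq _ Ho (HN1 k ltac:(unfold k; lia))).
      assert (/ INR (S (s k)) < M - m).
      { eapply Rle_lt_trans. apply inv_S_mono. apply (incr_ge s Hs k). apply HN2; unfold k; lia. }
      lra. }
  destruct HU as [c [Hc [d [Hd HU]]]].
  pose (W := fun q => O q /\ c <= phi q).
  assert (Wp0 : W p0) by (split; auto; unfold M in Hc; lra).
  assert (HWc : forall q l, (forall n, W (q n)) -> conv q l -> W l).
  { intros q l Hq Hl. destruct (Hl d Hd) as [N HN].
    assert (Ol : O l) by exact (HU (q N) (proj1 (Hq N)) (proj2 (Hq N)) l (near_sym _ _ _ (HN N (le_n N)))).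
    split; auto. apply Rnot_lt_le; intro Hlt.
    destruct (conv_ceps q l phi Hl (Cphi l Ol) (c - phi l)) as [N' HN']. lra.
    specialize (HN' N' (le_n _)). destruct (Hq N') as [_ Hc'].
    revert HN'; unfold Rabs; destruct (Rcase_abs _); lra. }
  pose (tt := fun n : nat => / INR (S n)).
  assert (Htt : forall n, 0 < tt n) by (intro n; apply Rinv_0_lt_compat, lt_0_INR; lia).
  assert (Hpm : forall n, exists pm, W pm /\ forall a, W a -> ph (tt n) a <= ph (tt n) pm).
  { intro n. apply (attain W (ph (tt n)) Bd). exists p0; auto.
    intros a [Ha' _]; auto.
    intros q l Hq Hl _. assert (Wl := HWc q l Hq Hl). split; auto. apply Cph. apply Wl. }
  destruct (choice_nat _ Hpm) as [pm Hpm'].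
  assert (H4a : exists N1, forall n, (N1 <= n)%nat -> psi z0 < ph (tt n) (pm n)).
  { destruct (Ft_conv psi u v alpha beta p0 (fun _ => p0) tt Hpsi (cu p0 Hp0) (cv p0 Hp0)
       (ca p0 Hp0) (cb p0 Hp0) (conv_const p0) tt_small (M - psi z0)) as [N HN]. lra.
    exists N. intros n Hn. specialize (HN n Hn). destruct (Hpm' n) as [_ Hmx].
    specialize (Hmx p0 Wp0). unfold ph in Hmx |- *; cbv beta in Hmx |- *. change (psi (u p0, v p0)) with M in HN.
    revert HN; unfold Rabs; destruct (Rcase_abs _); lra. }
  destruct H4a as [N1 HN1].
  assert (H4b : exists n, (N1 <= n)%nat /\ forall p, W p -> ph (tt n) p = ph (tt n) (pm n) ->
              exists r, 0 < r /\ forall y, near p y r -> W y).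
  { apply NNPP; intro Hc4.
    assert (Hn : forall n, exists p, W p /\ ph (tt (n + N1)%nat) p = ph (tt (n + N1)%nat) (pm (n + N1)%nat) /\
                ~ (exists r, 0 < r /\ forall y, near p y r -> W y)).
    { intros n. apply NNPP; intro Hn. apply Hc4. exists (n + N1)%nat. split. lia.
      intros p Wp Hp. apply NNPP; intro Hr. apply Hn. exists p; auto. }
    destruct (choice_nat _ Hn) as [ps Hps].
    destruct (BW2 ps Bd (fun n => HBd _ (proj1 (proj1 (Hps n))))) as [s [Hs [l Hl]]].
    assert (Wl : W l) by exact (HWc _ l (fun k => proj1 (Hps (s k))) Hl).
    pose (t' := fun k => tt (s k + N1)%nat).
    assert (Ht' : forall e, 0 < e -> exists N, forall k, (N <= k)%nat -> Rabs (t' k) < e).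
    { intros e He. destruct (inv_small e He) as [N HN]. exists N. intros k Hk.
      unfold t', tt. rewrite Rabs_pos_eq by (left; apply Rinv_0_lt_compat, lt_0_INR; lia).
      eapply Rle_lt_trans. apply inv_S_mono. 2: apply (HN k Hk).
      assert (Hg := incr_ge s Hs k). lia. }
    destruct (Ft_conv psi u v alpha beta l (fun k => ps (s k)) t' Hpsi (cu l (proj1 Wl)) (cv l (proj1 Wl))
       (ca l (proj1 Wl)) (cb l (proj1 Wl)) Hl Ht' ((M - c)/2)) as [Na HNa]. lra.
    destruct (Ft_conv psi u v alpha beta p0 (fun _ => p0) t' Hpsi (cu p0 Hp0) (cv p0 Hp0)
       (ca p0 Hp0) (cb p0 Hp0) (conv_const p0) Ht' ((M - c)/2)) as [Nb HNb]. lra.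
    assert (Hlc : c < phi l).
    { pose (k := max Na Nb). specialize (HNa k ltac:(unfold k; lia)). specialize (HNb k ltac:(unfold k; lia)).
      destruct (Hps (s k)) as [_ [Heq _]]. destruct (Hpm' (s k + N1)%nat) as [_ Hmx].
      specialize (Hmx p0 Wp0). rewrite <- Heq in Hmx.
      unfold ph, t' in Hmx, HNa, HNb; cbv beta in Hmx, HNa, HNb. change (psi (u p0, v p0)) with M in HNb.
      change (psi (u l, v l)) with (phi l) in HNa.
      revert HNa HNb; unfold Rabs; destruct (Rcase_abs _); destruct (Rcase_abs _); lra. }
    destruct (Cphi l (proj1 Wl) (phi l - c)) as [d1 [Hd1 Hd1']]. lra.
    pose (r := Rmin d1 d / 2).
    assert (Hr : 0 < r) by (unfold r; assert (0 < Rmin d1 d) by (apply Rmin_pos; auto); lra).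
    destruct (Hl r Hr) as [N HN].
    destruct (Hps (s N)) as [_ [_ Hno]]. apply Hno. exists r. split; auto. intros y Hy.
    assert (Hly : near l y (Rmin d1 d)).
    { replace (Rmin d1 d) with (r + r) by (unfold r; field). eapply near_trans. apply (HN N (le_n N)). exact Hy. }
    split.
    - apply (HU l (proj1 Wl) (proj2 Wl) y). eapply near_mono. exact Hly. apply Rmin_r.
    - assert (H := Hd1' y (near_mono _ _ _ d1 Hly (Rmin_l _ _))).
      revert H; unfold Rabs; destruct (Rcase_abs _); lra. }
  destruct H4b as [n [Hn Hgood]].
  pose (t := tt n). pose (Mt := ph t (pm n)).
  assert (HzMt : psi z0 < Mt) by exact (HN1 n Hn).
  destruct (attain (fun q => W q /\ ph t q = Mt)
     (fun q => (u q + t * alpha q - fst z0) ^ 2 + (v q + t * beta q - snd z0) ^ 2) Bd)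
     as [p [[Wp Hpe] Hpmax]].
  - exists (pm n). split. apply Hpm'. reflexivity.
  - intros a [[Ha' _] _]; auto.
  - intros q l Hq Hl _. assert (Wl := HWc q l (fun k => proj1 (Hq k)) Hl). split. split; auto.
    + apply NNPP; intro Hne'.
      assert (Hpos : 0 < Rabs (ph t l - Mt)) by (apply Rabs_pos_lt; intro E; apply Hne'; lra).
      destruct (conv_ceps q l (ph t) Hl (Cph t l (proj1 Wl)) _ Hpos) as [N HN].
      specialize (HN N (le_n N)). rewrite (proj2 (Hq N)) in HN. rewrite Rabs_minus_sym in HN. lra.
    + apply cont_ceps. apply cont_D; apply cont_lin; apply cu || apply ca || apply cv || apply cb; apply Wl.
  - destruct (Hgood p Wp Hpe) as [r [Hr Hr']].
    apply (local_contra O alpha alphax alphay beta betax betay u ux uy v vx vy psi t Mt r z0 p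
             HO Ha Hb Hu Hv (proj1 Wp) Hr Hpsi Hqc).
    + intros q Hq. destruct (Hpm' n) as [_ Hmx]. exact (Hmx q (Hr' q Hq)).
    + exact Hpe.
    + exact HzMt.
    + intros q Hq Heq. apply (Hpmax q). split. apply Hr'; auto. exact Heq.
    + apply det_nz with (h := h p); auto. apply HJ, Wp. apply Hsg, Wp. apply E1, Wp. apply E2, Wp. apply Htt.
Qed.


Theorem theorem4 (O : R2 -> Prop) (h alpha alphax alphay beta betax betay
    u ux uy v vx vy : R2 -> R) :
  open O -> (exists p, O p) -> bounded2 O ->
  (forall p, O p -> continuous h p) ->
  C1_on O alpha alphax alphay -> C1_on O beta betax betay ->
  (forall p, O p ->
     Rabs (alphax p * betay p - alphay p * betax p) + Rabs (h p) > 0) ->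
  (forall p, O p -> (alphax p * betay p - alphay p * betax p) * h p >= 0) ->
  C1_on O u ux uy -> C1_on O v vx vy ->
  (forall p, O p -> ux p * vy p - uy p * vx p = h p) ->
  (forall p, O p ->
     betay p * ux p - betax p * uy p - alphay p * vx p + alphax p * vy p = 0) ->
  convex_hull_like O (fun p => (u p, v p)).
Proof.
  intros HO Hne Hbd Hh Ha Hb HJ Hsg Hu Hv E1 E2 psi Hpsi Hqc.
  destruct (classic (exists xs, boundary2 O xs /\ Rbar_le (sup_on O (fun x => psi (u x, v x)))
      (limsup_on O (fun x => psi (u x, v x)) xs))) as [[xs [Hxs Hle]]|Hno].
  - exists xs. split; auto. apply Rbar_le_antisym; auto. apply limsup_le.
  - exfalso. apply (main_contra O h alpha alphax alphay beta betax betay u ux uy v vx vy psi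
      HO Hne Hbd Ha Hb HJ Hsg Hu Hv E1 E2 Hpsi Hqc).
    intros b Hb'. apply limsup_lt; auto. apply Rbar_not_le_lt. intro Hc. apply Hno. exists b; auto.
Qed.
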